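(* Let $n\ge5$ and let $C=(1,c_2,\dots,c_{n-1},2c_{n-1}-c_2)$ be a system with $n$ coin types, with subsystem $C'=(1,c_2,\dots,c_{n-1})$. Then $C$ is canonical and $C'$ is noncanonical if and only if $C=(1,2,\dots,n-3,c_{n-2},c_{n-2}+1,2c_{n-2})$ and $c_{n-2}>n-2$.
   Context: A system is a tuple $C=(c_1,\dots,c_n)$ of integers with $1=c_1<c_2<\dots<c_n$; for $k\le n$, $(c_1,\dots,c_k)$ is a subsystem. For a positive integer $v$, $\mathrm{opt}_C(v)$ is the minimum of $\sum_i x_i$ over $x\in\mathbb{Z}_{\ge0}^n$ with $\sum_i c_ix_i=v$. The greedy representation of $v$ is produced by: for $i=n$ down to $1$, while $c_i\le$ remaining value, take a coin $c_i$. $\mathrm{grd}_C(v)$ is its number of coins. A positive integer $w$ is a counterexample if $\mathrm{opt}_C(w)<\mathrm{grd}_C(w)$; $C$ is canonical if it has none, noncanonical otherwise. *)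

(* Defs.v *)
(* Coin systems are represented as sequences of naturals:
   C = [:: c_1; ...; c_n], so c_i = nth 0 C i.-1. *)
From mathcomp Require Import all_boot.
Set Implicit Arguments. Unset Strict Implicit. Unset Printing Implicit Defensive.

Definition is_system (C : seq nat) : bool :=
  (head 0 C == 1) && sorted ltn C.

Definition is_rep (C : seq nat) (v : nat) (x : seq nat) : Prop :=
  size x = size C /\ \sum_(i < size C) nth 0 C i * nth 0 x i = v.

Definition ncoins (x : seq nat) : nat := sumn x.

Definition is_opt (C : seq nat) (v k : nat) : Prop :=
  (exists x, is_rep C v x /\ ncoins x = k) /\
  (forall x, is_rep C v x -> k <= ncoins x).

(* Greedy: process coins from largest to smallest; for coin c, the loop
   "while c <= remaining, take c" takes (rem %/ c) coins, leaving rem %% c. *)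
Fixpoint grd_desc (s : seq nat) (v : nat) : nat :=
  match s with
  | [::] => 0
  | c :: s' => v %/ c + grd_desc s' (v %% c)
  end.

Definition grd (C : seq nat) (v : nat) : nat := grd_desc (rev C) v.

Definition counterexample (C : seq nat) (w : nat) : Prop :=
  0 < w /\ exists k, is_opt C w k /\ k < grd C w.

Definition canonical (C : seq nat) : Prop :=
  forall w, ~ counterexample C w.

Definition noncanonical (C : seq nat) : Prop :=
  exists w, counterexample C w.

(* Main.v *)
Require Import Defs.
From mathcomp Require Import all_boot zify.
From Stdlib Require Import Classical.
Set Implicit Arguments. Unset Strict Implicit. Unset Printing Implicit Defensive.

Definition val (C x : seq nat) := \sum_(i < size C) nth 0 C i * nth 0 x i.

Lemma val_incr C x i : i < size C -> val C (incr_nth x i) = val C x + nth 0 C i.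
Proof.
move=> hi; rewrite /val.
under eq_bigr => j _ do rewrite nth_incr_nth mulnDr.
rewrite big_split /= addnC; congr (_ + _).
rewrite (bigD1 (Ordinal hi)) //= eqxx muln1 big1 ?addn0 // => j.
rewrite -val_eqE /= => hj; rewrite eq_sym (negbTE hj); by rewrite muln0.
Qed.

Lemma sumn_incr x i : i < size x -> sumn (incr_nth x i) = (sumn x).+1.
Proof.
elim: x i => [|a x IH] [|i] //= hi.
by rewrite IH // addnS.
Qed.

Lemma rep_incr C v x i : is_rep C v x -> i < size C ->
  is_rep C (v + nth 0 C i) (incr_nth x i) /\ ncoins (incr_nth x i) = (ncoins x).+1.
Proof.
move=> [hs hv] hi; split; last by rewrite /ncoins sumn_incr // hs.
split; first by rewrite size_incr_nth hs hi.
by have := val_incr x hi; rewrite /val hv.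
Qed.

Lemma rep_dec C v x i : is_rep C v x -> 0 < nth 0 x i ->
  exists y, is_rep C (v - nth 0 C i) y /\ (ncoins y).+1 = ncoins x
            /\ nth 0 C i <= v /\ i < size C.
Proof.
move=> [hs hv] hx.
have hi : i < size x by rewrite ltnNge; apply/negP => h; move: hx; rewrite nth_default.
set y := set_nth 0 x i (nth 0 x i).-1.
have hsy : size y = size x by rewrite size_set_nth; apply/maxn_idPr.
have hyx : incr_nth y i = x.
  apply: (@eq_from_nth _ 0); first by rewrite size_incr_nth hsy hi.
  move=> j _; rewrite nth_incr_nth nth_set_nth /=.
  by case: (eqVneq j i) => [->|hj] //=; rewrite add1n prednK.
have hiC : i < size C by rewrite -hs.
have := val_incr y hiC; rewrite hyx /val hv => hvy.
exists y; split; [split => //; first by rewrite hsy|].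
  rewrite /val; lia.
split; last by split => //; lia.
by rewrite /ncoins -hyx sumn_incr ?hsy.
Qed.

Lemma rep_nil C : is_rep C 0 (nseq (size C) 0) /\ ncoins (nseq (size C) 0) = 0.
Proof.
split; last by rewrite /ncoins sumn_nseq.
split; first by rewrite size_nseq.
by rewrite big1 // => i _; rewrite nth_nseq if_same muln0.
Qed.

Lemma rep_rcons C v x c k : is_rep C v x ->
  is_rep (rcons C c) (v + c * k) (rcons x k) /\ ncoins (rcons x k) = ncoins x + k.
Proof.
move=> [hs hv]; split; last by rewrite /ncoins sumn_rcons.
split; first by rewrite !size_rcons hs.
rewrite size_rcons big_ord_recr /= -hv; congr (_ + _).
  apply: eq_bigr => j _; rewrite !nth_rcons hs ltn_ord //.
by rewrite !nth_rcons hs ltnn eqxx.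
Qed.

Lemma rep_pos C v x : is_rep C v x -> 0 < v -> exists i, i < size C /\ 0 < nth 0 x i.
Proof.
move=> [hs hv] hp.
case: (pickP (fun i : 'I_(size C) => 0 < nth 0 x i)) => [i hi|h].
  by exists i; split.
move: hp; rewrite -hv big1 // => i _.
by move: (h i) => /= /negbT; rewrite -leqNgt leqn0 => /eqP ->; rewrite muln0.
Qed.

Lemma sumn_nth s : sumn s = \sum_(i < size s) nth 0 s i.
Proof.
elim: s => [|a s IH]; first by rewrite big_ord0.
by rewrite /= big_ord_recl /= IH.
Qed.

Lemma rep_const C v x u : is_rep C v x ->
  (forall i, i < size C -> 0 < nth 0 x i -> nth 0 C i = u) -> v = u * ncoins x.
Proof.
move=> [hs hv] h; rewrite -hv /ncoins sumn_nth hs big_distrr /=.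
apply: eq_bigr => i _.
case: (posnP (nth 0 x i)) => [->|hp]; first by rewrite !muln0.
by rewrite h.
Qed.

Lemma min_ex (P : nat -> Prop) n : P n -> exists m, P m /\ forall k, k < m -> ~ P k.
Proof.
elim: n {-2}n (leqnn n) => [|N IH] n hn hP.
  exists n; split => // k hk; lia.
destruct (classic (exists k, k < n /\ P k)) as [[k [hk hPk]]|hno].
  apply: (IH k) => //; lia.
exists n; split => // k hk hPk; apply: hno; by exists k.
Qed.

Lemma grd_desc0 s : grd_desc s 0 = 0.
Proof. by elim: s => //= c s IH; rewrite div0n mod0n IH. Qed.

Lemma grd0 C : grd C 0 = 0.
Proof. exact: grd_desc0. Qed.

Lemma bad_cex C w x : is_rep C w x -> ncoins x < grd C w -> counterexample C w.
Proof.
move=> hr hlt.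
have [k [[y [hy hyk]] hmin]] := @min_ex (fun k => exists y, is_rep C w y /\ ncoins y = k) _ (ex_intro _ x (conj hr erefl)).
split.
  case: (posnP w) => // w0; move: hlt; rewrite w0 grd0 //.
exists k; split.
  split; first by exists y.
  move=> z hz; rewrite leqNgt; apply/negP => hzk; apply: (hmin _ hzk); by exists z.
rewrite leqNgt; apply/negP => hk.
have : ncoins x < k by lia.
move=> h; apply: (hmin _ h); by exists x.
Qed.

Lemma canon_le C w x : canonical C -> is_rep C w x -> grd C w <= ncoins x.
Proof.
move=> hc hr; rewrite leqNgt; apply/negP => h; exact: (hc w (bad_cex hr h)).
Qed.

Lemma noncanon_bad C : noncanonical C -> exists w x, is_rep C w x /\ ncoins x < grd C w.
Proof.
move=> [w [_ [k [[[x [hx hk]] _] hlt]]]]; exists w, x; split => //; by rewrite hk.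
Qed.

Lemma bad_noncanon C w x : is_rep C w x -> ncoins x < grd C w -> noncanonical C.
Proof. move=> hr h; exists w; exact: bad_cex hr h. Qed.

Lemma local_canon C :
  (forall w i, i < size C -> nth 0 C i <= w -> grd C w <= (grd C (w - nth 0 C i)).+1) ->
  canonical C.
Proof.
move=> hl.
have key : forall k w x, ncoins x = k -> is_rep C w x -> grd C w <= k.
  elim=> [|k IH] w x hk hr.
    case: (posnP w) => [->|wp]; first by rewrite grd0.
    have [i [hi hxi]] := rep_pos hr wp.
    have [y [_ [hy _]]] := rep_dec hr hxi; lia.
  case: (posnP w) => [->|wp]; first by rewrite grd0.
  have [i [hi hxi]] := rep_pos hr wp.
  have [y [hry [hy [hle hiC]]]] := rep_dec hr hxi.
  have := IH _ _ (esym (etrans (esym (succn_inj (etrans hy hk))) erefl)) hry.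
  have := hl w i hiC hle; lia.
move=> w [_ [k [[[x [hx hk]] _] hlt]]].
have := key _ _ _ hk hx; lia.
Qed.

Lemma grd_rcons C c v : grd (rcons C c) v = v %/ c + grd C (v %% c).
Proof. by rewrite /grd rev_rcons. Qed.

Lemma grd_small C c v : v < c -> grd (rcons C c) v = grd C v.
Proof. by move=> h; rewrite grd_rcons divn_small // modn_small. Qed.

Lemma grd_step C c v : 0 < c -> c <= v -> grd (rcons C c) v = (grd (rcons C c) (v - c)).+1.
Proof.
move=> hc hv; rewrite !grd_rcons -{1 2}(subnK hv) divnDr ?dvdnn // divnn hc modnDr.
by rewrite addn1 addSn.
Qed.

Lemma nth_lt s i j : sorted ltn s -> i < j -> j < size s -> nth 0 s i < nth 0 s j.
Proof.
move=> hs hij hj; apply: (sorted_ltn_nth ltn_trans 0 hs) => //; rewrite inE //; lia.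
Qed.

Lemma nth_le s i j : sorted ltn s -> i <= j -> j < size s -> nth 0 s i <= nth 0 s j.
Proof.
move=> hs; rewrite leq_eqVlt => /orP [/eqP -> //|hij] hj.
by apply: ltnW; apply: nth_lt.
Qed.

Lemma div0_mod v c : v %/ c = 0 -> v %% c = v.
Proof. by move=> h; rewrite {2}(divn_eq v c) h. Qed.

Lemma grd_rep C v : exists x, is_rep (1 :: C) v x /\ ncoins x = grd (1 :: C) v.
Proof.
elim/last_ind: C v => [|C c IH] v.
  exists [:: v]; split; last by rewrite /ncoins /grd /= divn1 !addn0.
  by split => //; rewrite big_ord1 /= mul1n.
have [x0 [hr hn]] := IH (v %% c).
have [hr' hn'] := rep_rcons c (v %/ c) hr.
exists (rcons x0 (v %/ c)); split.
  by move: hr'; rewrite mulnC addnC -divn_eq.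
by rewrite hn' hn -rcons_cons grd_rcons addnC.
Qed.

Lemma grd_pos C v : 0 < v -> 0 < grd (1 :: C) v.
Proof.
elim/last_ind: C v => [|C c IH] v hv.
  by rewrite /grd /= divn1 addn0.
rewrite -rcons_cons grd_rcons.
case: (posnP (v %/ c)) => h; last by rewrite ltn_addr.
by rewrite h add0n div0_mod //; apply: IH.
Qed.

Lemma grd_one C v : 0 < v -> grd (1 :: C) v = 1 -> v \in 1 :: C.
Proof.
elim/last_ind: C v => [|C c IH] v hv.
  by rewrite /grd /= divn1 addn0 => ->; rewrite inE.
rewrite -rcons_cons grd_rcons mem_rcons inE => h.
case: (posnP (v %/ c)) => hq.
  move: h; rewrite hq add0n div0_mod // => h.
  by rewrite (IH v hv h) orbT.
have hr : grd (1 :: C) (v %% c) = 0 by lia.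
have hm : v %% c = 0.
  case: (posnP (v %% c)) => // hp; have := grd_pos C hp; lia.
have hq1 : v %/ c = 1 by lia.
by rewrite {1}(divn_eq v c) hm hq1 mul1n addn0 eqxx.
Qed.

Lemma grd_coin C v : sorted ltn C -> v \in C -> 0 < v -> grd C v = 1.
Proof.
elim/last_ind: C v => [|C c IH] v //.
move=> hs; rewrite mem_rcons inE => /orP [/eqP ->|hv] hp.
  by rewrite grd_rcons divnn hp modnn grd0.
have hsC : sorted ltn C by move: hs; rewrite -cats1 => /cat_sorted2 [].
have hvc : v < c.
  have := @nth_lt (rcons C c) (index v C) (size C) hs.
  rewrite size_rcons !nth_rcons ltnn eqxx index_mem hv nth_index //.
  by move=> h; apply: h; rewrite -?index_mem.
by rewrite grd_small // IH.
Qed.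

Lemma div_one x d : 0 < d -> d <= x -> x < 2 * d -> x %/ d = 1.
Proof.
move=> hd h1 h2.
have a : 1 <= x %/ d by rewrite leq_divRL // mul1n.
have b : x %/ d < 2 by rewrite ltn_divLR // mulnC.
lia.
Qed.

Lemma grd_iota m v : 0 < m -> grd (iota 1 m) v = (v + m.-1) %/ m.
Proof.
case: m => // k _; elim: k v => [|k IH] v.
  by rewrite /grd /= !addn0 !divn1.
have -> : iota 1 k.+2 = rcons (iota 1 k.+1) k.+2 by rewrite -cats1 -[k.+2]addn1 iotaD add1n addn1.
rewrite grd_rcons IH /=.
set r := v %% k.+2.
have hr : r < k.+2 by rewrite ltn_mod.
have -> : v + k.+1 = (v %/ k.+2) * k.+2 + (r + k.+1) by rewrite /r {1}(divn_eq v k.+2) addnA.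
rewrite divnMDl //; congr (_ + _).
case: (posnP r) => [->|rp].
  by rewrite !add0n !divn_small.
rewrite !div_one //; lia.
Qed.

Section Back.
Variables m b : nat.
Hypothesis hm : 2 <= m.
Hypothesis hb : m.+1 < b.

Definition H v := (v + m.-1) %/ m.
Definition F r := if r < b then H r else if r == b then 1 else (H (r - b.+1)).+1.

Lemma H0 : H 0 = 0.
Proof. rewrite /H divn_small //; lia. Qed.
Lemma Hsmall v : v <= m -> H v <= 1.
Proof. move=> h; rewrite /H -ltnS ltn_divLR; lia. Qed.
Lemma Hpos v : 1 <= v -> 1 <= H v.
Proof. move=> h; rewrite /H leq_divRL; lia. Qed.
Lemma Hmono v v' : v <= v' -> H v <= H v'.
Proof. move=> h; rewrite /H leq_div2r //; lia. Qed.
Lemma Hadd v k : k <= m -> H (v + k) <= (H v).+1.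
Proof.
move=> h; rewrite /H.
have : (v + k + m.-1) %/ m <= (v + m.-1 + 1 * m) %/ m by apply: leq_div2r; lia.
rewrite divnDMl; lia.
Qed.

Lemma F_lt r : r < b -> F r = H r.
Proof. by move=> h; rewrite /F h. Qed.
Lemma F_eq : F b = 1.
Proof. by rewrite /F ltnn eqxx. Qed.
Lemma F_gt r : b < r -> F r = (H (r - b.+1)).+1.
Proof. move=> h; rewrite /F ltnNge ltnW //=; case: eqP => //; lia. Qed.

Definition IB := iota 1 m.
Definition C1B := rcons (rcons IB b) b.+1.
Definition CB := rcons C1B (2 * b).

Lemma grdI v : grd IB v = H v.
Proof. rewrite /IB grd_iota //; lia. Qed.

Lemma grdC1 r : r < 2 * b -> grd C1B r = F r.
Proof.
move=> hr; rewrite /C1B.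
case: (ltnP r b.+1) => h.
  rewrite grd_small //.
  case: (ltnP r b) => h2.
    by rewrite grd_small // grdI F_lt.
  have -> : r = b by lia.
  by rewrite grd_step ?subnn ?grd0 ?F_eq //; lia.
rewrite grd_step; [|lia|lia].
rewrite grd_small; last lia.
rewrite grd_small; last lia.
by rewrite grdI F_gt //.
Qed.

Lemma grdC Q R : R < 2 * b -> grd CB (Q * (2 * b) + R) = Q + F R.
Proof.
move=> hR; elim: Q => [|Q IH].
  by rewrite /CB grd_small // grdC1.
rewrite /CB grd_step; [|lia|lia].
have -> : Q.+1 * (2 * b) + R - 2 * b = Q * (2 * b) + R by rewrite mulSn; lia.
by rewrite -/CB IH.
Qed.

Definition coin c := (1 <= c <= m) \/ c = b \/ c = b.+1 \/ c = 2 * b.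

Lemma coinC i : i < size CB -> coin (nth 0 CB i).
Proof.
rewrite /CB /C1B !size_rcons /IB size_iota => hi.
rewrite !nth_rcons !size_rcons size_iota.
case: (ltnP i m) => h1.
  have -> : i < m.+2 by lia. have -> : i < m.+1 by lia.
  rewrite nth_iota //; left; lia.
case: (ltnP i m.+1) => h2.
  have -> : i = m by lia. have -> : m < m.+2 by lia. rewrite eqxx; right; left; done.
case: (ltnP i m.+2) => h3.
  have -> : i = m.+1 by lia. rewrite eqxx; right; right; left; done.
have -> : i = m.+2 by lia. rewrite eqxx; right; right; right; done.
Qed.

Lemma Fi c R : coin c -> c <= R -> R < 2 * b -> F R <= (F (R - c)).+1.
Proof.
move=> [hk|[->|[->|->]]] hcR hR.
- case: (ltnP R b) => h1.
    rewrite !F_lt; [|lia|lia].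
    have := Hadd (R - c) (k := c); rewrite subnK //; move=> /(_ (proj2 (andP hk))); done.
  case: (eqVneq R b) => [->|hne]; first by rewrite F_eq.
  rewrite F_gt; last lia.
  case: (ltnP (R - c) b) => h2.
    rewrite F_lt // ltnS; apply: Hmono; lia.
  case: (eqVneq (R - c) b) => [e|hne2].
    rewrite e F_eq ltnS; apply: Hsmall; lia.
  rewrite F_gt; last lia.
  rewrite ltnS.
  have := Hadd (R - c - b.+1) (k := c).
  have -> : R - c - b.+1 + c = R - b.+1 by lia.
  move=> h; apply: h; lia.
- case: (eqVneq R b) => [->|hne]; first by rewrite F_eq.
  rewrite F_gt; last lia.
  rewrite F_lt; last lia.
  rewrite ltnS; apply: Hmono; lia.
- rewrite F_gt; last lia.
  by rewrite (F_lt (r := R - b.+1)) //; lia.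
- lia.
Qed.

Lemma Fii c R : coin c -> R < c -> c <= 2 * b -> F R <= F (2 * b + R - c).
Proof.
move=> [hk|[->|[->|->]]] hRc hc.
- rewrite F_lt; last lia.
  rewrite F_gt; last lia.
  apply: leq_trans (Hsmall _) _; lia.
- rewrite F_lt //.
  case: (posnP R) => [->|hp]; first by rewrite H0.
  rewrite F_gt; last lia.
  have := Hadd (R - 1) (k := 1).
  have -> : R - 1 + 1 = R by lia.
  have -> : 2 * b + R - b - b.+1 = R - 1 by lia.
  move=> h; apply: h; lia.
- case: (posnP R) => [->|hp].
    by rewrite F_lt ?H0 //; lia.
  case: (eqVneq R 1) => [->|h1].
    have -> : 2 * b + 1 - b.+1 = b by lia.
    rewrite F_eq F_lt ?Hsmall //; lia.
  rewrite (F_gt (r := 2 * b + R - b.+1)); last lia.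
  have -> : 2 * b + R - b.+1 - b.+1 = R - 2 by lia.
  case: (ltnP R b) => hRb.
    rewrite F_lt //.
    have := Hadd (R - 2) (k := 2).
    have -> : R - 2 + 2 = R by lia.
    move=> h; apply: h; lia.
  have -> : R = b by lia.
  by rewrite F_eq.
- by have -> : 2 * b + R - 2 * b = R by lia.
Qed.

Lemma C_canon : canonical CB.
Proof.
apply: local_canon => w i hi hcw.
have hc := coinC hi.
set c := nth 0 CB i in hc hcw *.
have hb0 : 0 < 2 * b by lia.
have hR : w %% (2 * b) < 2 * b by rewrite ltn_mod.
set Q := w %/ (2 * b); set R := w %% (2 * b).
have hw : w = Q * (2 * b) + R by rewrite /Q /R -divn_eq.
have hc2 : c <= 2 * b by case: hc; lia.
case: (leqP c R) => hcR.
  have -> : w - c = Q * (2 * b) + (R - c) by lia.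
  rewrite hw !grdC //; last lia.
  have := Fi hc hcR hR; lia.
have hQ : 0 < Q.
  case: (posnP Q) => // hQ0; move: hcw; rewrite hw hQ0 mul0n add0n; lia.
have -> : w - c = Q.-1 * (2 * b) + (2 * b + R - c).
  rewrite hw; have -> : Q = Q.-1.+1 by rewrite prednK.
  rewrite mulSn /=; lia.
rewrite hw !grdC //; last lia.
have := Fii hc hcR hc2; lia.
Qed.

Lemma C1_noncanon : noncanonical C1B.
Proof.
have [hr0 hn0] := rep_nil C1B.
have hsz : size C1B = m.+2 by rewrite /C1B !size_rcons /IB size_iota.
have hnb : nth 0 C1B m = b by rewrite /C1B !nth_rcons !size_rcons /IB size_iota ltnS leqnn ltnn eqxx.
have hm2 : m < size C1B by rewrite hsz.
have [hr1 hn1] := rep_incr hr0 hm2.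
have [hr2 hn2] := rep_incr hr1 hm2.
apply: (bad_noncanon hr2).
rewrite hn2 hn1 hn0 hnb add0n.
rewrite /C1B grd_step; [|lia|lia].
rewrite grd_small; last lia.
rewrite grd_small; last lia.
have -> : b + b - b.+1 = b.-1 by lia.
rewrite !ltnS.
have hp : 0 < b.-1 by lia.
have : b.-1 \notin IB by rewrite /IB mem_iota; lia.
have -> : IB = 1 :: iota 2 m.-1 by rewrite /IB; case: (m) hm.
move=> hn.
have := grd_pos (iota 2 m.-1) hp.
case: (eqVneq (grd (1 :: iota 2 m.-1) b.-1) 1) => [h|h]; last lia.
by move: hn; rewrite (grd_one hp h).
Qed.

End Back.

Section Fwd.
Variables (Q : seq nat) (b d e : nat).
Let P := 1 :: Q.
Let C1 := rcons (rcons P b) d.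
Let C := rcons C1 e.
Let c := nth 0 Q 0.
Let p := size P.
Hypothesis hQ : 1 <= size Q.
Hypothesis hs : sorted ltn C.
Hypothesis he : e = 2 * d - c.
Hypothesis hcan : canonical C.
Hypothesis hnc : noncanonical C1.

Lemma szC1 : size C1 = p.+2. Proof. by rewrite /C1 !size_rcons. Qed.
Lemma szC : size C = p.+3. Proof. by rewrite /C size_rcons szC1. Qed.
Lemma nthC_C1 j : j < p.+2 -> nth 0 C j = nth 0 C1 j.
Proof. by move=> h; rewrite /C nth_rcons szC1 h. Qed.
Lemma nthC1_P j : j < p -> nth 0 C1 j = nth 0 P j.
Proof. move=> h; rewrite /C1 !nth_rcons size_rcons -/p h; have -> : j < p.+1 by lia. done. Qed.
Lemma sC1 : sorted ltn C1.
Proof. by move: hs; rewrite /C -cats1 => /cat_sorted2 []. Qed.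
Lemma sP : sorted ltn P.
Proof. by move: sC1; rewrite /C1 -!cats1 -catA => /cat_sorted2 []. Qed.
Lemma nb : nth 0 C1 p = b.
Proof. by rewrite /C1 !nth_rcons !size_rcons -/p ltnSn ltnn eqxx. Qed.
Lemma nd : nth 0 C1 p.+1 = d.
Proof. by rewrite /C1 !nth_rcons !size_rcons -/p ltnn eqxx. Qed.
Lemma ne : nth 0 C p.+2 = e.
Proof. by rewrite /C nth_rcons szC1 ltnn eqxx. Qed.
Lemma n0 : nth 0 C1 0 = 1.
Proof. by rewrite nthC1_P. Qed.
Lemma n1 : nth 0 C1 1 = c.
Proof. rewrite nthC1_P /p /P //=; lia. Qed.
Lemma hp : p = (size Q).+1. Proof. by []. Qed.

Lemma facts : 1 < c /\ c < b /\ b < d /\ d < e.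
Proof.
have h1 := @nth_lt C1 0 1 sC1 (ltac:(done)) (ltac:(rewrite szC1; lia)).
have h2 := @nth_lt C1 1 p sC1 (ltac:(rewrite hp; lia)) (ltac:(rewrite szC1; lia)).
have h3 := @nth_lt C1 p p.+1 sC1 (ltac:(done)) (ltac:(rewrite szC1; lia)).
have h4 := @nth_lt C p.+1 p.+2 hs (ltac:(done)) (ltac:(rewrite szC; lia)).
move: h1 h2 h3 h4; rewrite (nthC_C1 (j := p.+1)) // n0 n1 nb nd ne; lia.
Qed.

Lemma coinC1 j : j <= p -> 1 <= nth 0 C1 j <= b /\ (j = 0 \/ c <= nth 0 C1 j).
Proof.
move=> hj.
have hb := @nth_le C1 j p sC1 hj (ltac:(rewrite szC1; lia)).
have h0 := @nth_le C1 0 j sC1 (leq0n _) (ltac:(rewrite szC1; lia)).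
rewrite nb n0 in hb h0; split; first lia.
case: (posnP j) => [->|hj0]; first by left.
right; have := @nth_le C1 1 j sC1 hj0 (ltac:(rewrite szC1; lia)); by rewrite n1.
Qed.

Lemma memP v : v \in P -> v = 1 \/ c <= v.
Proof.
move=> hv; have hi : index v P < p by rewrite index_mem.
have := coinC1 (ltnW hi); rewrite nthC1_P // nth_index // => [[_ [h|h]]]; last by right.
by left; move: (nth_index 0 hv); rewrite h.
Qed.

Lemma grdP_ge2 v : 0 < v -> v \notin P -> 2 <= grd P v.
Proof.
move=> hv hn; have := grd_pos Q hv; rewrite -/P.
case: (eqVneq (grd P v) 1) => [h|]; last lia.
by move: hn; rewrite (grd_one hv h).
Qed.

Lemma grdC1_P v : v < b -> grd C1 v = grd P v.
Proof. move=> h; have [_ [_ [hbd _]]] := facts; rewrite /C1 grd_small; [|lia]; rewrite grd_small //. Qed.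

Lemma grdC_C1 v : v < e -> grd C v = grd C1 v.
Proof. by move=> h; rewrite /C grd_small. Qed.

Definition badw w := exists x, is_rep C1 w x /\ ncoins x < grd C1 w.

Lemma main : c = 2 /\ d = b.+1 /\ e = 2 * b /\ b.-1 \notin P.
Proof.
have [hc1 [hcb [hbd hde]]] := facts.
have [w1 [x1 [hx1 hl1]]] := noncanon_bad hnc.
have [w0 [[x [hx hlt]] hmin]] := @min_ex badw w1 (ex_intro _ x1 (conj hx1 hl1)).
have hwe : e <= w0.
  rewrite leqNgt; apply/negP => hw.
  have [hr hn] := rep_rcons e 0 hx.
  have := canon_le hcan hr; rewrite muln0 addn0 hn addn0 /C grd_small //; lia.
have hB : nth 0 x p.+1 = 0.
  case: (posnP (nth 0 x p.+1)) => // hpos.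
  have [y [hy [hny [hdw _]]]] := rep_dec hx hpos.
  rewrite nd in hy hdw.
  exfalso; apply: (hmin (w0 - d)); first lia.
  exists y; split => //.
  move: hlt; rewrite /C1 grd_step; [|lia|lia]; rewrite -/C1; lia.
have hC : forall j, j < p.+2 -> 0 < nth 0 x j ->
    j <= p /\ nth 0 C1 j = d - c + 1 /\ w0 - nth 0 C1 j < d.
  move=> j hj hxj.
  have hjp : j <= p.
    case: (eqVneq j p.+1) => [ej|nej]; first by move: hxj; rewrite ej hB.
    lia.
  have [/andP [hu1 hub] _] := coinC1 hjp.
  set u := nth 0 C1 j in hu1 hub *.
  have hC1 : w0 - u < d.
    rewrite ltnNge; apply/negP => hdu.
    have [y [hy [hny [huw hjs]]]] := rep_dec hx hxj.
    have hnb1 : ~ (ncoins y < grd C1 (w0 - u)).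
      move=> h; apply: (hmin (w0 - u)); first lia. by exists y.
    have [z [hz hnz]] := grd_rep (rcons (rcons Q b) d) (w0 - u - d).
    have [hz' hnz'] := rep_incr hz hjs.
    have hnb2 : ~ ((ncoins z).+1 < grd C1 (w0 - d)).
      move=> h; apply: (hmin (w0 - d)); first lia.
      exists (incr_nth z j); split; last by rewrite hnz'.
      by have -> : w0 - d = w0 - u - d + u by lia.
    have e1 : grd C1 w0 = (grd C1 (w0 - d)).+1 by rewrite /C1 grd_step //; lia.
    have e2 : grd C1 (w0 - u) = (grd C1 (w0 - u - d)).+1 by rewrite /C1 grd_step //; lia.
    move: hnz; rewrite -rcons_cons -/P -/C1 => hnz.
    lia.
  split => //; split => //.
  have hud : d - c < u by lia.
  have [hr0 hn0] := rep_nil C.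
  have hjC : j < size C by rewrite szC; lia.
  have hdC : p.+1 < size C by rewrite szC.
  have [hr1 hn1] := rep_incr hr0 hjC.
  have [hr2 hn2] := rep_incr hr1 hdC.
  have := canon_le hcan hr2.
  rewrite hn2 hn1 hn0 add0n (nthC_C1 hj) (nthC_C1 (j := p.+1)) // nd -/u.
  rewrite /C grd_step; [|lia|lia]; rewrite -/C.
  set v := u + d - e.
  have hvc : v < c by rewrite /v; lia.
  rewrite grdC_C1; last lia.
  rewrite grdC1_P; last lia.
  case: (leqP v 1) => hv1; first by move=> _; rewrite /v in hv1; lia.
  have : v \notin P.
    apply/negP => /memP; lia.
  move=> /(grdP_ge2 (ltnW hv1)); lia.
have hw0 : 0 < w0 by lia.
have [j0 [hj0 hxj0]] := rep_pos hx hw0.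
move: hj0; rewrite szC1 => hj0.
have [hj0p [hu0 hwu0]] := hC j0 hj0 hxj0.
have hconst : w0 = (d - c + 1) * ncoins x.
  apply: (rep_const hx) => j; rewrite szC1 => hj hxj.
  by have [_ [-> _]] := hC j hj hxj.
have [/andP [hu1 hub] hu] := coinC1 hj0p.
have hk2 : 2 <= ncoins x.
  case: (posnP (ncoins x)) => [h0|hp0]; first by move: hconst; rewrite h0 muln0; lia.
  case: (eqVneq (ncoins x) 1) => [h1|]; last lia.
  exfalso.
  have hw0u : w0 = nth 0 C1 j0 by rewrite hconst h1 muln1 hu0.
  have := grd_coin sC1 (v := w0).
  rewrite hw0u mem_nth ?szC1 // => /(_ isT (ltac:(lia))) hg.
  move: hlt; rewrite hw0u hg h1; done.
have hcu : c <= d - c + 1.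
  case: hu => [ej|]; last by rewrite hu0.
  by move: hu0; rewrite ej n0; lia.
have [hk hc2] : ncoins x = 2 /\ c = 2.
  case: (eqVneq (ncoins x) 2) => [h2|h2].
    split => //; move: hconst; rewrite h2; lia.
  have : (d - c + 1) * 3 <= (d - c + 1) * ncoins x by rewrite leq_mul2l; lia.
  lia.
have hdb : d = b.+1 by lia.
have heb : e = 2 * b by lia.
split => //; split => //; split => //.
have hw2 : w0 = b + b by lia.
move: hlt; rewrite hk hw2 /C1 grd_step; [|lia|lia].
rewrite -/C1 (_ : b + b - d = b.-1); last lia.
rewrite grdC1_P; last lia.
move=> hg; apply/negP => hin.
have := grd_coin sP hin (ltac:(lia)); lia.
Qed.


Lemma P_iota : P = iota 1 p.
Proof.
have [hc1 [hcb [hbd hde]]] := facts.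
have [hc2 [hdb [heb _]]] := main.
have key : forall i, i < p -> nth 0 P i = i.+1.
  elim=> [|i IH] hi; first by [].
  have IHi := IH (ltnW hi).
  set s := nth 0 P i.+1.
  have hsi : nth 0 P i < s by apply: nth_lt => //; exact: sP.
  have hsb : s < b.
    have := @nth_lt C1 i.+1 p sC1 hi (ltac:(rewrite szC1; lia)).
    by rewrite nb nthC1_P.
  have [hr0 hn0] := rep_nil C.
  have hjC : i.+1 < size C by rewrite szC; lia.
  have hbC : p < size C by rewrite szC; lia.
  have [hr1 hn1] := rep_incr hr0 hjC.
  have [hr2 hn2] := rep_incr hr1 hbC.
  have := canon_le hcan hr2.
  rewrite hn2 hn1 hn0 add0n (nthC_C1 (j := i.+1)) ?(nthC_C1 (j := p)) // ?nb ?nthC1_P //; try lia.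
  rewrite -/s grdC_C1; last lia.
  rewrite /C1 grd_step; [|lia|lia]; rewrite -/C1.
  rewrite (_ : s + b - d = s.-1); last lia.
  rewrite grdC1_P; last lia.
  move=> hg.
  have hg1 : grd P s.-1 = 1 by have := grd_pos Q (v := s.-1) (ltac:(lia)); rewrite -/P; lia.
  have hpos : 0 < s.-1 by lia.
  have hin : s.-1 \in P by exact: grd_one hpos hg1.
  set j := index s.-1 P.
  have hj : j < p by rewrite index_mem.
  have hnj : nth 0 P j = s.-1 by rewrite nth_index.
  case: (leqP j i) => hji.
    have := @nth_le P j i sP hji (ltac:(lia)); lia.
  have := @nth_le P i.+1 j sP hji hj; rewrite -/s; lia.
apply: (@eq_from_nth _ 0); first by rewrite size_iota.
move=> i hi; rewrite nth_iota ?key //; lia.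
Qed.

Lemma fwd : P = iota 1 p /\ d = b.+1 /\ e = 2 * b /\ p.+1 < b.
Proof.
have [hc1 [hcb [hbd hde]]] := facts.
have [hc2 [hdb [heb hn]]] := main.
have hP := P_iota.
split => //; split => //; split => //.
move: hn; rewrite hP mem_iota; lia.
Qed.

End Fwd.

Lemma decomp (C : seq nat) n : 5 <= n -> size C = n -> head 0 C = 1 ->
  exists Q b d e, C = 1 :: rcons (rcons (rcons Q b) d) e /\ n = (size Q).+4.
Proof.
case: C => [|x C'] /=; first lia.
move=> hn hs hx; subst x.
case/lastP: C' hs => [|C2 e] /=; first lia.
case/lastP: C2 => [|C3 d]; first by rewrite /=; lia.
case/lastP: C3 => [|Q b]; first by rewrite /=; lia.
rewrite !size_rcons => hs.
exists Q, b, d, e; split => //; lia.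
Qed.

Theorem theorem12 (n : nat) (C : seq nat) :
  5 <= n ->
  size C = n ->
  is_system C ->
  nth 0 C n.-1 = 2 * nth 0 C (n - 2) - nth 0 C 1 ->
  (canonical C /\ noncanonical (take n.-1 C)) <->
  (C = iota 1 (n - 3) ++ [:: nth 0 C (n - 3); (nth 0 C (n - 3)).+1;
                             2 * nth 0 C (n - 3)]
   /\ n - 2 < nth 0 C (n - 3)).
Proof.
move=> hn hsz hsys.
have hsys' := hsys; move: hsys' => /andP [/eqP hh hsort].
have [Q [b [d [e [hC hnQ]]]]] := decomp hn hsz hh.
rewrite hnQ; subst C.
have hQ : 1 <= size Q by lia.
rewrite -rcons_cons in hsort *.
set C := rcons (rcons (rcons (1 :: Q) b) d) e in hsort *.
have hsC : size (rcons (rcons (1 :: Q) b) d) = (size Q).+3 by rewrite !size_rcons.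
have hCcat : C = (1 :: Q) ++ [:: b; d; e] by rewrite /C -!cats1 -!catA.
have ne : nth 0 C (size Q).+4.-1 = e.
  rewrite hCcat nth_cat /= ltnNge (_ : (size Q).+1 <= (size Q).+3) //; last lia.
  by rewrite (_ : (size Q).+3 - (size Q).+1 = 2) //; lia.
have nd : nth 0 C ((size Q).+4 - 2) = d.
  rewrite hCcat nth_cat /= (_ : (size Q).+4 - 2 = (size Q).+2); last lia.
  rewrite ltnNge leqnSn /=.
  by rewrite (_ : (size Q).+2 - (size Q).+1 = 1) //; lia.
have nb : nth 0 C ((size Q).+4 - 3) = b.
  rewrite hCcat nth_cat /= (_ : (size Q).+4 - 3 = (size Q).+1); last lia.
  by rewrite ltnn subnn.
have n1 : nth 0 C 1 = nth 0 Q 0.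
  by rewrite hCcat nth_cat /= ltnS hQ.
have ht : take (size Q).+4.-1 C = rcons (rcons (1 :: Q) b) d.
  by rewrite /C -cats1 take_size_cat.
rewrite ne nd nb n1 ht => he.
split.
  move=> [hcan hnc].
  have [hP [hdb [heb hb]]] := fwd hQ hsort he hcan hnc.
  split; last by move: hb => /=; lia.
  rewrite hCcat hdb heb (_ : (size Q).+4 - 3 = size (1 :: Q)); last by rewrite /=; lia.
  by rewrite -hP.
move=> [hCeq hb].
have hm : size (1 :: Q) = (size Q).+4 - 3 by rewrite /=; lia.
move: hCeq; rewrite hCcat.
move/eqP; rewrite eqseq_cat ?size_iota // => /andP [/eqP hP /eqP [hd he']].
have e3 : (size Q).+4 - 3 = (size Q).+1 by lia.
rewrite e3 in hP.
have hm2 : 2 <= (size Q).+1 by lia.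
have hb2 : (size Q).+2 < b by lia.
have ecan : C = CB (size Q).+1 b.
  by rewrite /C /CB /C1B /IB hd he' -hP.
split; first by rewrite -hCcat ecan; exact: C_canon.
have -> : rcons (rcons (1 :: Q) b) d = C1B (size Q).+1 b.
  by rewrite /C1B /IB hd -hP.
exact: C1_noncanon.
Qed.
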